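(* Let $\mathcal{X}$ and $\mathcal{Y}$ be finite additive groups, $n,m\ge1$, and let $F:\mathcal{X}^n\to\mathcal{Y}^m$ be a random linear code, i.e. a random variable taking values in the set of group homomorphisms $\mathcal{X}^n\to\mathcal{Y}^m$. Let $\Sigma_n,\Sigma_m$ be uniformly distributed random permutations of the coordinates of $\mathcal{X}^n$ and $\mathcal{Y}^m$ respectively, let $\bar Y^m$ be a uniformly distributed random vector on $\mathcal{Y}^m$, with $F,\Sigma_n,\Sigma_m,\bar Y^m$ mutually independent, and define $\hat F(\mathbf{x})=\Sigma_m(F(\Sigma_n(\mathbf{x})))+\bar Y^m$. Then for all $\mathbf{x}_1\neq\mathbf{x}_2$ in $\mathcal{X}^n$ and all $\mathbf{y}_1,\mathbf{y}_2\in\mathcal{Y}^m$, $$\Pr\{\hat F(\mathbf{x}_1)=\mathbf{y}_1\}=|\mathcal{Y}|^{-m},$$ $$\Pr\{\hat F(\mathbf{x}_2)=\mathbf{y}_2\mid \hat F(\mathbf{x}_1)=\mathbf{y}_1\}=|\mathcal{Y}|^{-m}\,\alpha(F)(P_{\mathbf{x}_2-\mathbf{x}_1},P_{\mathbf{y}_2-\mathbf{y}_1}).$$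
   Context: For a sequence $\mathbf{x}\in\mathcal{X}^n$, its type $P_{\mathbf{x}}$ is the distribution on $\mathcal{X}$ given by $P_{\mathbf{x}}(a)=N(a|\mathbf{x})/n$, where $N(a|\mathbf{x})$ is the number of occurrences of $a$ in $\mathbf{x}$; $\mathcal{P}_n(\mathcal{X})$ is the set of types of sequences in $\mathcal{X}^n$ (similarly for $\mathcal{Y}^m$). A permutation of coordinates acts on $\mathcal{X}^n$ by permuting entries. For a map $f:\mathcal{X}^n\to\mathcal{Y}^m$, its joint spectrum is $S_{\mathcal{X}\mathcal{Y}}(f)(P,Q)=|\{\mathbf{x}\in\mathcal{X}^n: P_{\mathbf{x}}=P,\ P_{f(\mathbf{x})}=Q\}|/|\mathcal{X}|^n$. For $P\in\mathcal{P}_n(\mathcal{X})$, $Q\in\mathcal{P}_m(\mathcal{Y})$, with $\binom{n}{nP}=n!/\prod_{a}(nP(a))!$ and $\binom{m}{mQ}=m!/\prod_{b}(mQ(b))!$, define for a random map $F$ $$\alpha(F)(P,Q)=\frac{E[S_{\mathcal{X}\mathcal{Y}}(F)(P,Q)]}{\binom{n}{nP}\binom{m}{mQ}\,|\mathcal{X}|^{-n}|\mathcal{Y}|^{-m}}.$$ *)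

(* Defs.v *)
From HB Require Import structures.
From mathcomp Require Import all_boot all_order all_algebra all_fingroup.
Set Implicit Arguments. Unset Strict Implicit. Unset Printing Implicit Defensive.
Import Order.TTheory GRing.Theory Num.Theory.
Local Open Scope ring_scope.

(* The type of x, represented by its count vector a |-> N(a|x)
   (for fixed n this is in bijection with P_x = N(.|x)/n). *)
Definition ntype (X : finType) (n : nat) (x : {ffun 'I_n -> X}) : {ffun X -> nat} :=
  [ffun a => #|[set i | x i == a]|].

Definition multinom (X : finType) (n : nat) (c : {ffun X -> nat}) : nat :=
  (n`! %/ \prod_(a : X) (c a)`!)%N.

Definition spectrum (R : realFieldType) (X Y : finType) (n m : nat)
  (f : {ffun 'I_n -> X} -> {ffun 'I_m -> Y})
  (P : {ffun X -> nat}) (Q : {ffun Y -> nat}) : R :=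
  (#|[set x : {ffun 'I_n -> X} | (ntype x == P) && (ntype (f x) == Q)]|)%:R
    / ((#|X| ^ n)%N)%:R.

(* A random map F is given by its probability mass function pF on the
   finite type of all maps X^n -> Y^m. *)
Definition alpha (R : realFieldType) (X Y : finType) (n m : nat)
  (pF : {ffun {ffun 'I_n -> X} -> {ffun 'I_m -> Y}} -> R)
  (P : {ffun X -> nat}) (Q : {ffun Y -> nat}) : R :=
  (\sum_(f : {ffun {ffun 'I_n -> X} -> {ffun 'I_m -> Y}}) pF f * spectrum R f P Q)
  / ((multinom n P)%:R * (multinom m Q)%:R
      * ((#|X|%:R : R) ^- n) * ((#|Y|%:R : R) ^- m)).

Definition permx (T : Type) (n : nat) (s : 'S_n) (x : {ffun 'I_n -> T}) :
  {ffun 'I_n -> T} := [ffun i => x (s i)].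

Definition is_pmf (R : realFieldType) (T : finType) (p : T -> R) : Prop :=
  (forall t, 0 <= p t) /\ \sum_(t : T) p t = 1.

Definition Fhat (X Y : finZmodType) (n m : nat)
  (f : {ffun {ffun 'I_n -> X} -> {ffun 'I_m -> Y}})
  (s1 : 'S_n) (s2 : 'S_m) (yb : {ffun 'I_m -> Y}) (x : {ffun 'I_n -> X}) :
  {ffun 'I_m -> Y} := permx s2 (f (permx s1 x)) + yb.

(* Probability of an event on (F, Sigma_n, Sigma_m, Ybar), these being
   mutually independent, F ~ pF, and the other three uniform. *)
Definition probHat (R : realFieldType) (X Y : finZmodType) (n m : nat)
  (pF : {ffun {ffun 'I_n -> X} -> {ffun 'I_m -> Y}} -> R)
  (E : {ffun {ffun 'I_n -> X} -> {ffun 'I_m -> Y}} -> 'S_n -> 'S_m ->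
       {ffun 'I_m -> Y} -> bool) : R :=
  \sum_(f : {ffun {ffun 'I_n -> X} -> {ffun 'I_m -> Y}})
   \sum_(s1 : 'S_n) \sum_(s2 : 'S_m) \sum_(yb : {ffun 'I_m -> Y})
     pF f / ((n`! * m`! * #|Y| ^ m)%N)%:R * (E f s1 s2 yb)%:R.

Definition condProbHat (R : realFieldType) (X Y : finZmodType) (n m : nat)
  (pF : {ffun {ffun 'I_n -> X} -> {ffun 'I_m -> Y}} -> R)
  (A B : {ffun {ffun 'I_n -> X} -> {ffun 'I_m -> Y}} -> 'S_n -> 'S_m ->
       {ffun 'I_m -> Y} -> bool) : R :=
  probHat pF (fun f s1 s2 yb => A f s1 s2 yb && B f s1 s2 yb) / probHat pF B.

(* Main.v *)
Require Import Defs.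
From HB Require Import structures.
From mathcomp Require Import all_boot all_order all_algebra all_fingroup.
From mathcomp Require Import ring.
Set Implicit Arguments. Unset Strict Implicit. Unset Printing Implicit Defensive.
Import GRing.Theory Num.Theory.

Section Comb.
Variables (T : finType) (n : nat).
Implicit Types (x y : {ffun 'I_n -> T}) (s t : 'S_n).

Lemma permxM s t x : permx s (permx t x) = permx (s * t) x.
Proof. by apply/ffunP=> i; rewrite !ffunE permM. Qed.
Lemma permx1 x : permx 1 x = x.
Proof. by apply/ffunP=> i; rewrite !ffunE perm1. Qed.

Definition fib x (a : T) := [set i | x i == a].

Lemma ntype_fib x a : ntype x a = #|fib x a|.
Proof. by rewrite ffunE. Qed.

Lemma permx_trans x y : ntype x = ntype y -> exists t, permx t x = y.
Proof.
move=> E.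
pose g i := nth i (enum (fib x (y i))) (index i (enum (fib y (y i)))).
have gP i : x (g i) = y i.
  have Hi : i \in enum (fib y (y i)) by rewrite mem_enum inE.
  have : g i \in enum (fib x (y i)).
    apply: mem_nth; rewrite -cardE -ntype_fib E ntype_fib cardE.
    by rewrite index_mem.
  by rewrite mem_enum inE => /eqP.
have ginj : injective g.
  move=> i j gij.
  have Eij : y i = y j by rewrite -gP gij gP.
  move: gij; rewrite /g -Eij.
  have Hi : i \in enum (fib y (y i)) by rewrite mem_enum inE.
  have Hj : j \in enum (fib y (y i)) by rewrite mem_enum inE Eij.
  have sz : size (enum (fib y (y i))) = size (enum (fib x (y i))).
    by rewrite -!cardE -!ntype_fib E.
  move/eqP; rewrite (set_nth_default i j); last by rewrite -sz index_mem.
  rewrite nth_uniq ?enum_uniq // -?sz ?index_mem //.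
  by move/eqP/(congr1 (nth i (enum (fib y (y i))))); rewrite !nth_index.
exists (perm ginj); apply/ffunP=> i; by rewrite ffunE permE gP.
Qed.


Variable x : {ffun 'I_n -> T}.

Lemma stabP s : reflect (forall i, x (s i) = x i) (permx s x == x).
Proof.
apply: (iffP eqP) => [E i|E]; first by rewrite -{2}E ffunE.
by apply/ffunP=> i; rewrite ffunE E.
Qed.

Lemma stabE s : permx s x == x -> forall i, x (s i) = x i.
Proof. by move/stabP. Qed.

Definition cutf s (P : pred T) i := if P (x i) then s i else i.

Lemma cutf_inj s P : permx s x == x -> injective (cutf s P).
Proof.
move=> /stabP E i j; rewrite /cutf.
case: ifP => Pi; case: ifP => Pj.
- exact: perm_inj.
- by move=> sij; move: Pj; rewrite -sij E Pi.
- by move=> sij; move: Pi; rewrite sij E Pj.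
- done.
Qed.

Lemma cutf_split s a : permx s x == x ->
  forall i, cutf s (predC1 a) (cutf s (pred1 a) i) = s i.
Proof.
move=> st i; rewrite /cutf /=.
have [xa|xa] := eqVneq (x i) a.
  by rewrite (stabE st) xa eqxx.
by rewrite xa.
Qed.

Definition Dset (r : seq T) := [set i | x i \in r].
Definition G (r : seq T) := [set s : 'S_n | (permx s x == x) && perm_on (Dset r) s].

Lemma perm_on_stab a p : perm_on (fib x a) p -> permx p x == x.
Proof.
move=> pa; apply/stabP=> i.
have [->//|ne] := eqVneq (p i) i.
have Hi : i \in fib x a by apply: (subsetP pa); rewrite inE ne.
have := Hi; rewrite -(perm_closed _ pa) !inE => /eqP ->.
by move: Hi; rewrite inE => /eqP.
Qed.

Lemma perm_on_mul_case a r p q : perm_on (fib x a) p -> perm_on (Dset r) q ->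
  permx q x == x -> perm_on (Dset (a :: r)) (p * q)%g.
Proof.
move=> pA qD qs; apply/subsetP=> i; rewrite inE permM => ne.
have [pi|pi] := eqVneq (p i) i.
  move: ne; rewrite pi => ne.
  have : i \in Dset r by apply: (subsetP qD); rewrite inE.
  by rewrite !inE => ->; rewrite orbT.
have : i \in fib x a by apply: (subsetP pA); rewrite inE.
by rewrite !inE => ->.
Qed.

Lemma cardG r : uniq r -> #|G r| = (\prod_(a <- r) (#|fib x a|)`!)%N.
Proof.
elim: r => [|a r IH] /=.
  move=> _; rewrite big_nil; apply/eqP/cards1P; exists 1%g.
  apply/setP=> s; rewrite !inE; apply/idP/idP.
  - case/andP=> _ ps; apply/eqP/permP=> i; rewrite perm1.
    by apply: (out_perm ps); rewrite inE.
  - move/eqP->; rewrite perm_on1 andbT; apply/stabP=> i; by rewrite perm1.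
case/andP=> ar ur; rewrite big_cons -IH // -card_perm.
pose A := [set p : 'S_n | perm_on (fib x a) p].
have -> : #|perm_on (fib x a)| = #|A|.
  by apply: eq_card => p; rewrite inE.
rewrite -cardsX.
have disj q i : q \in G r -> x i == a -> q i = i.
  rewrite inE => /andP[_ qr] xa; apply: (out_perm qr).
  by rewrite inE (eqP xa).
have -> : G (a :: r) = [set (pq.1 * pq.2)%g | pq in setX A (G r)].
  apply/setP=> s; apply/idP/imsetP.
  - rewrite inE => /andP[st sD].
    pose p := perm (@cutf_inj s (pred1 a) st).
    pose q := perm (@cutf_inj s (predC1 a) st).
    have pA : p \in A.
      rewrite inE; apply/subsetP=> i; rewrite !inE permE /cutf /=.
      by case: ifP => //; rewrite eqxx.
    have qG : q \in G r.
      rewrite inE; apply/andP; split.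
        apply/stabP=> i; rewrite permE /cutf /=; case: ifP => // _.
        exact: (stabE st i).
      apply/subsetP=> i; rewrite !inE permE /cutf /=; case: ifP; last by rewrite eqxx.
      move=> xa ne; have : i \in Dset (a :: r) by apply: (subsetP sD); rewrite inE.
      by rewrite inE in_cons (negbTE xa).
    exists (p, q); first by rewrite inE pA qG.
    apply/permP=> i; rewrite permM /= !permE.
    by rewrite cutf_split.
  - case=> [[p q]] /=; rewrite inE /= => /andP[pA qG] ->.
    rewrite inE in pA; have := qG; rewrite inE => /andP[qs qD].
    rewrite inE; apply/andP; split.
      by rewrite -permxM (eqP qs) (perm_on_stab pA).
    exact: perm_on_mul_case pA qD qs.
apply: card_in_imset => [[p q] [p' q']]; rewrite !in_setX /=.
move=> /andP[pA qG] /andP[p'A q'G] E.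
rewrite !inE in pA p'A.
have pe : p = p'.
  apply/permP=> i.
  have [xa|xa] := eqVneq (x i) a.
    have pa : x (p i) == a.
      have : p i \in fib x a by rewrite (perm_closed _ pA) inE xa.
      by rewrite inE.
    have p'a : x (p' i) == a.
      have : p' i \in fib x a by rewrite (perm_closed _ p'A) inE xa.
      by rewrite inE.
    have := congr1 (fun s : 'S_n => s i) E; rewrite /= !permM.
    by rewrite (disj q _ qG pa) (disj q' _ q'G p'a).
  by rewrite (out_perm pA) ?(out_perm p'A) // inE xa.
by move: E; rewrite pe => /mulgI ->.
Qed.


Definition Kf (c : {ffun T -> nat}) := (\prod_(a : T) (c a)`!)%N.

Lemma card_stab : #|[set s : 'S_n | permx s x == x]| = Kf (ntype x).
Proof.
have -> : [set s : 'S_n | permx s x == x] = G (enum T).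
  apply/setP => s; rewrite !inE; case: (permx s x == x) => //=.
  by apply/esym/subsetP => i _; rewrite inE mem_enum.
rewrite cardG ?enum_uniq // /Kf big_enum /=.
by apply: eq_bigr => a _; rewrite ntype_fib.
Qed.

Lemma ntype_permx s y : ntype (permx s y) = ntype y.
Proof.
apply/ffunP=> a; rewrite !ffunE.
have -> : [set i | permx s y i == a] = s @^-1: [set i | y i == a].
  by apply/setP=> i; rewrite !inE ffunE.
by rewrite card_preimset //; apply: perm_inj.
Qed.

Lemma coset_eq t s : (permx s x == permx t x) = (permx (t^-1 * s) x == x).
Proof.
apply/eqP/eqP => H.
  by rewrite -permxM H permxM mulVg permx1.
by rewrite -[in RHS]H permxM mulgA mulgV mul1g.
Qed.

Lemma card_N y : #|[set s : 'S_n | permx s x == y]| =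
  if ntype y == ntype x then Kf (ntype x) else 0%N.
Proof.
case: eqP => E.
  have [t tx] := permx_trans (esym E).
  rewrite -card_stab -(card_lcoset [set s : 'S_n | permx s x == x] t).
  apply: eq_card => s.
  by rewrite mem_lcoset !inE -tx coset_eq.
apply: eq_card0 => s; rewrite inE; apply/negP => /eqP H.
by apply: E; rewrite -H ntype_permx.
Qed.

End Comb.

Local Open Scope ring_scope.

Lemma sum_permx (R : realFieldType) (T : finType) n (x : {ffun 'I_n -> T})
  (h : {ffun 'I_n -> T} -> R) :
  \sum_(s : 'S_n) h (permx s x) =
  (Kf (ntype x))%:R * \sum_(y | ntype y == ntype x) h y.
Proof.
rewrite (partition_big (fun s => permx s x) predT) //=.
rewrite big_distrr /= [RHS]big_mkcond /=.
apply: eq_bigr => y _.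
rewrite (eq_bigr (fun _ => h y)); last by move=> s /eqP ->.
rewrite (eq_bigl (fun s => s \in [set s : 'S_n | permx s x == y])); last first.
  by move=> s; rewrite inE.
rewrite sumr_const card_N; case: ifP => _; last by rewrite mulr0n.
by rewrite mulr_natl.
Qed.

Lemma count_type (T : finType) n (x : {ffun 'I_n -> T}) :
  (Kf (ntype x) * #|[set y : {ffun 'I_n -> T} | ntype y == ntype x]|)%N = n`!.
Proof.
rewrite -card_Sn -[#|{perm 'I_n}|]sum1_card.
rewrite (partition_big (fun s => permx s x) predT) //=.
rewrite -sum1_card big_distrr /= [LHS]big_mkcond /=.
apply: eq_bigr => y _.
rewrite (eq_bigl (fun s => s \in [set s : 'S_n | permx s x == y])); last first.
  by move=> s; rewrite !inE.
rewrite sum1_card card_N inE; case: ifP => _; by rewrite ?muln1.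
Qed.

Lemma Kf_gt0 (T : finType) (c : {ffun T -> nat}) : (0 < Kf c)%N.
Proof. by rewrite /Kf; apply/prodn_gt0 => a; apply: fact_gt0. Qed.

Lemma multinomK (T : finType) n (x : {ffun 'I_n -> T}) :
  (multinom n (ntype x) * Kf (ntype x))%N = n`!.
Proof.
rewrite /multinom -/(Kf (ntype x)) -(count_type x) mulKn ?Kf_gt0 //.
by rewrite mulnC.
Qed.

Lemma sum_shift (R : realFieldType) (Y : finZmodType) m (a : R)
  (z y : {ffun 'I_m -> Y}) :
  \sum_(v : {ffun 'I_m -> Y}) a * (z + v == y)%:R = a.
Proof.
rewrite (bigD1 (y - z)) //= (addrC z) subrK eqxx mulr1 big1 ?addr0 // => v ne.
suff -> : (z + v == y) = false by rewrite mulr0.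
apply/negP => /eqP H; move/eqP: ne; apply; rewrite -H.
by rewrite (addrC z) addrK.
Qed.

Lemma sum_shift2 (R : realFieldType) (Y : finZmodType) m (a : R)
  (z1 z2 y1 y2 : {ffun 'I_m -> Y}) :
  \sum_(v : {ffun 'I_m -> Y}) a * ((z2 + v == y2) && (z1 + v == y1))%:R
  = a * (z2 - z1 == y2 - y1)%:R.
Proof.
rewrite (bigD1 (y1 - z1)) //= (addrC z1) subrK eqxx andbT big1 ?addr0 //.
  congr (_ * (nat_of_bool _)%:R).
  apply/eqP/eqP => H.
    by rewrite -H addrCA (addrC y1) addrK.
  by rewrite addrCA H addrCA subrr addr0.
move=> v ne.
suff -> : (z1 + v == y1) = false by rewrite andbF mulr0.
apply/negP => /eqP H; move/eqP: ne; apply; rewrite -H.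
by rewrite (addrC z1) addrK.
Qed.

Lemma sum_eq1 (R : realFieldType) (T : finType) (P : pred T) (a : R) e :
  \sum_(y | P y) a * (y == e)%:R = a * (P e)%:R.
Proof.
rewrite big_mkcond (bigD1 e) //= big1 ?addr0 => [|y ne].
  by case: (P e); rewrite ?mulr0 // eqxx.
by rewrite (negbTE ne) mulr0; case: (P y).
Qed.

Lemma sum_count (R : realFieldType) (T : finType) (A B : pred T) :
  \sum_(y | A y) (B y)%:R = (#|[set y | A y && B y]|)%:R :> R.
Proof.
rewrite (eq_bigr (fun y => if B y then 1 else 0)); last by move=> y _; case: (B y).
rewrite -big_mkcondr /=.
rewrite (eq_bigl (fun y => y \in [set y | A y && B y])); last by move=> y; rewrite inE.
by rewrite sumr_const.
Qed.

Lemma permxB (Y : finZmodType) m (s : 'S_m) (u v : {ffun 'I_m -> Y}) :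
  permx s (u - v) = permx s u - permx s v.
Proof. by apply/ffunP=> i; rewrite !ffunE. Qed.

Lemma sum_const_perm (R : realFieldType) k (a : R) :
  \sum_(s : 'S_k) a = (k`!)%:R * a.
Proof. by rewrite sumr_const card_Sn mulr_natl. Qed.

Lemma sum_permx_eq (R : realFieldType) (T : finType) k (x e : {ffun 'I_k -> T}) (a : R) :
  \sum_(s : 'S_k) a * (permx s x == e)%:R =
  a * (Kf (ntype e))%:R * (ntype x == ntype e)%:R.
Proof.
rewrite (@sum_permx _ _ _ x (fun y => a * (y == e)%:R)) sum_eq1 eq_sym.
by case: eqP => [->|_]; rewrite ?mulr0 // mulrCA mulrA.
Qed.

Lemma sum_permx_type (R : realFieldType) (T U : finType) k l (x : {ffun 'I_k -> T})
  (g : {ffun 'I_k -> T} -> {ffun 'I_l -> U}) Q (a : R) :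
  \sum_(s : 'S_k) a * (ntype (g (permx s x)) == Q)%:R =
  a * (Kf (ntype x))%:R *
   (#|[set y | (ntype y == ntype x) && (ntype (g y) == Q)]|)%:R.
Proof.
rewrite (@sum_permx _ _ _ x (fun y => a * (ntype (g y) == Q)%:R)) -big_distrr /= sum_count.
by rewrite mulrCA mulrA.
Qed.

Unset Implicit Arguments.

Theorem proposition5 (R : realFieldType) (X Y : finZmodType) (n m : nat)
  (pF : {ffun {ffun 'I_n -> X} -> {ffun 'I_m -> Y}} -> R) :
  (0 < n)%N -> (0 < m)%N ->
  is_pmf pF ->
  (* F is a random linear code: supported on group homomorphisms *)
  (forall f, pF f != 0 -> forall x x', f (x + x') = f x + f x') ->
  forall (x1 x2 : {ffun 'I_n -> X}) (y1 y2 : {ffun 'I_m -> Y}),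
    x1 != x2 ->
    probHat pF (fun f s1 s2 yb => Fhat f s1 s2 yb x1 == y1)
      = ((#|Y|%:R : R) ^- m)
    /\
    condProbHat pF (fun f s1 s2 yb => Fhat f s1 s2 yb x2 == y2)
                   (fun f s1 s2 yb => Fhat f s1 s2 yb x1 == y1)
      = ((#|Y|%:R : R) ^- m) * alpha pF (ntype (x2 - x1)) (ntype (y2 - y1)).
Proof.
move=> n0 m0 [pF0 pF1] lin x1 x2 y1 y2 _.
set c : R := ((n`! * m`! * #|Y| ^ m)%N)%:R.
have Yp : (0 < #|Y|)%N by apply/card_gt0P; exists 0.
have Y0 : (#|Y|%:R : R) != 0 by rewrite pnatr_eq0 -lt0n.
have X0 : (#|X|%:R : R) != 0.
  by rewrite pnatr_eq0 -lt0n; apply/card_gt0P; exists 0.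
have nf : (n`!%:R : R) != 0 by rewrite pnatr_eq0 -lt0n fact_gt0.
have mf : (m`!%:R : R) != 0 by rewrite pnatr_eq0 -lt0n fact_gt0.
have c0 : c != 0 by rewrite /c pnatr_eq0 -lt0n !muln_gt0 !fact_gt0 expn_gt0 Yp.
have P1 : probHat pF (fun f s1 s2 yb => Fhat f s1 s2 yb x1 == y1) = ((#|Y|%:R : R) ^- m).
  rewrite /probHat /Fhat.
  under eq_bigr => f _ do under eq_bigr => s1 _ do under eq_bigr => s2 _ do rewrite sum_shift.
  rewrite -/c.
  under eq_bigr => f _ do rewrite sum_const_perm sum_const_perm.
  rewrite (eq_bigr (fun f => pF f * (n`!%:R * m`!%:R / c))); last by move=> f _; ring.
  rewrite -big_distrl /= pF1.
  rewrite /c !natrM natrX; field.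
  by rewrite expf_neq0 ?nf ?mf.
split=> //.
set P := ntype (x2 - x1); set Q := ntype (y2 - y1).
set Cnt := fun f : {ffun {ffun 'I_n -> X} -> {ffun 'I_m -> Y}} =>
  #|[set x | (ntype x == P) && (ntype (f x) == Q)]|.
rewrite /condProbHat P1 /probHat /Fhat.
under eq_bigr => f _ do under eq_bigr => s1 _ do under eq_bigr => s2 _ do rewrite sum_shift2.
rewrite -/c.
rewrite (eq_bigr (fun f => pF f / c * (Kf P)%:R * (Kf Q)%:R * (Cnt f)%:R)); last first.
  move=> f _.
  have [->|nz] := eqVneq (pF f) 0.
    by rewrite !mul0r big1 // => s1 _; rewrite big1 // => s2 _; rewrite !mul0r.
  have fB u v : f (u - v) = f u - f v.
    by apply/eqP; rewrite eq_sym subr_eq -lin // subrK.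
  under eq_bigr => s1 _ do under eq_bigr => s2 _ do rewrite -permxB -fB -permxB.
  under eq_bigr => s1 _ do rewrite sum_permx_eq.
  rewrite -/Q sum_permx_type -/P.
  by rewrite /Cnt -!mulrA (mulrCA (Kf Q)%:R).
rewrite /alpha /spectrum -/P -/Q.
set S := \sum_f pF f * (Cnt f)%:R.
rewrite (eq_bigr (fun f => pF f * (Cnt f)%:R * ((Kf P)%:R * (Kf Q)%:R / c))); last first.
  by move=> f _; ring.
rewrite -big_distrl /= -/S.
rewrite (eq_bigr (fun f => pF f * (Cnt f)%:R * ((#|X| ^ n)%N%:R)^-1)); last first.
  by move=> f _; rewrite /Cnt; ring.
rewrite -big_distrl /= -/S.
have MP := multinomK (x2 - x1); have MQ := multinomK (y2 - y1).
rewrite -/P in MP; rewrite -/Q in MQ.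
have KP0 : ((Kf P)%:R : R) != 0 by rewrite pnatr_eq0 -lt0n Kf_gt0.
have KQ0 : ((Kf Q)%:R : R) != 0 by rewrite pnatr_eq0 -lt0n Kf_gt0.
have MP0 : ((multinom n P)%:R : R) != 0.
  by rewrite pnatr_eq0 -lt0n; move: (fact_gt0 n); rewrite -MP muln_gt0 => /andP[].
have MQ0 : ((multinom m Q)%:R : R) != 0.
  by rewrite pnatr_eq0 -lt0n; move: (fact_gt0 m); rewrite -MQ muln_gt0 => /andP[].
rewrite /c -MP -MQ !natrM !natrX.
field.
by repeat (apply/andP; split); rewrite ?expf_neq0 //;
  first [exact: MP0 | exact: MQ0 | exact: KP0 | exact: KQ0].
Qed.
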